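(* Let $x \in \mathbb{R}$ with $1 - x - x^2 \neq 0$, let $m \geq 1$ be an integer and let $n \geq 0$ be an integer. Then \[ \sum_{r=1}^{n} r^m F_r x^r = \frac{1}{1 - x - x^2} \sum_{i=1}^m \binom{m}{i} (-1)^{i + 1} \sum_{r=1}^n r^{m - i} F_r x^r + \frac{x^2}{1 - x - x^2} \sum_{i=1}^m \binom{m}{i} \sum_{r=1}^{n-1} r^{m - i} F_r x^r - \frac{n^m (F_{n+1} x^{n+1} + F_n x^{n+2})}{1 - x - x^2}. \]
   Context: $(F_r)_{r \geq 0}$ is the Fibonacci sequence: $F_0 = 0$, $F_1 = 1$, $F_r = F_{r-1} + F_{r-2}$ for $r \geq 2$. Empty sums are $0$. *)

(* Defs.v *)
From mathcomp Require Import all_boot all_order all_algebra.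
From mathcomp Require Import reals.
Set Implicit Arguments. Unset Strict Implicit. Unset Printing Implicit Defensive.

Fixpoint fib (r : nat) : nat :=
  match r with
  | 0 => 0
  | 1 => 1
  | (S ((S r'') as r')) as _ => fib r' + fib r''
  end.

(* Main.v *)
Require Import Defs.
From mathcomp Require Import ring.
From mathcomp Require Import all_boot all_order all_algebra.
From mathcomp Require Import reals.
Import Order.TTheory GRing.Theory Num.Theory.
Local Open Scope ring_scope.

Lemma binA (R : comNzRingType) (a : R) (m : nat) :
  \sum_(1 <= i < m.+1) ('C(m, i)%:R * (-1) ^+ (i + 1) * a ^+ (m - i))
  = a ^+ m - (a - 1) ^+ m.
Proof.
rewrite [in RHS]exprDn big_ord_recl /= subn0 bin0 expr0 mulr1 mulr1n.
rewrite opprD addrA subrr add0r -sumrN big_add1 /= big_mkord.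
apply: eq_bigr => i _.
rewrite addn1 /bump /= add1n exprS mulN1r -mulNrn -mulr_natr; ring.
Qed.

Lemma binB (R : comNzRingType) (a : R) (m : nat) :
  \sum_(1 <= i < m.+1) ('C(m, i)%:R * a ^+ (m - i))
  = (a + 1) ^+ m - a ^+ m.
Proof.
rewrite [in RHS]exprDn big_ord_recl /= subn0 bin0 expr0 mulr1 mulr1n.
rewrite addrC addKr big_add1 /= big_mkord.
apply: eq_bigr => i _.
by rewrite expr1n mulr1 mulr_natl.
Qed.

Section Main.
Variables (R : realType) (x : R) (m : nat).
Definition G j k := \sum_(1 <= r < k) ((r%:R : R) ^+ j * (fib r)%:R * x ^+ r).

Lemma Gstep j k : G j k.+1 = G j k + k%:R ^+ j * (fib k)%:R * x ^+ k.
Proof.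
rewrite /G; case: k => [|k]; first by rewrite !big_geq // add0r mulr0 mul0r.
by rewrite big_nat_recr.
Qed.

Definition A n := \sum_(1 <= i < m.+1) ('C(m, i)%:R * (-1) ^+ (i + 1) * G (m - i) n.+1).
Definition B n := \sum_(1 <= i < m.+1) ('C(m, i)%:R * G (m - i) n).

Lemma key n : (1 <= m)%N -> (1 - x - x ^+ 2) * G m n.+1 =
  A n + x ^+ 2 * B n - n%:R ^+ m * ((fib n.+1)%:R * x ^+ n.+1 + (fib n)%:R * x ^+ n.+2).
Proof.
move=> hm; elim: n => [|n IH].
  have G1 j : G j 1 = 0 by rewrite /G big_geq.
  have G0 j : G j 0 = 0 by rewrite /G big_geq.
  rewrite /A /B G1 big1; last by move=> i _; rewrite G1 mulr0.
  rewrite big1; last by move=> i _; rewrite G0 mulr0.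
  case: m hm => // m' _; rewrite expr0n /=; ring.
have hA : A n.+1 = A n + ((n.+1)%:R ^+ m - n%:R ^+ m) * (fib n.+1)%:R * x ^+ n.+1.
  rewrite /A -[n.+1 in LHS]/(n.+1).
  under eq_bigr => i _ do rewrite Gstep mulrDr.
  rewrite big_split; congr (_ + _).
  transitivity ((\sum_(1 <= i < m.+1) ('C(m, i)%:R * (-1) ^+ (i + 1) * ((n.+1)%:R : R) ^+ (m - i)))
     * (fib n.+1)%:R * x ^+ n.+1).
    by rewrite !mulr_suml; apply: eq_bigr => i _; ring.
  by rewrite binA -natr1 addrK.
have hB : B n.+1 = B n + ((n%:R + 1) ^+ m - n%:R ^+ m) * (fib n)%:R * x ^+ n.
  rewrite /B.
  under eq_bigr => i _ do rewrite Gstep mulrDr.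
  rewrite big_split; congr (_ + _).
  transitivity ((\sum_(1 <= i < m.+1) ('C(m, i)%:R * (n%:R : R) ^+ (m - i)))
     * (fib n)%:R * x ^+ n).
    by rewrite !mulr_suml; apply: eq_bigr => i _; ring.
  by rewrite binB.
rewrite Gstep mulrDr IH hA hB.
have -> : (fib n.+2)%:R = (fib n.+1)%:R + (fib n)%:R :> R by rewrite -natrD.
rewrite -natr1 !exprS; ring.
Qed.
End Main.

Theorem theorem2p1 (R : realType) (x : R) (m n : nat)
  (hx : 1 - x - x ^+ 2 != 0) (hm : (1 <= m)%N) :
  \sum_(1 <= r < n.+1) (r%:R ^+ m * (fib r)%:R * x ^+ r)
  = (1 - x - x ^+ 2)^-1 *
      \sum_(1 <= i < m.+1) ('C(m, i)%:R * (-1) ^+ (i + 1) *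
         \sum_(1 <= r < n.+1) (r%:R ^+ (m - i) * (fib r)%:R * x ^+ r))
    + x ^+ 2 / (1 - x - x ^+ 2) *
      \sum_(1 <= i < m.+1) ('C(m, i)%:R *
         \sum_(1 <= r < n) (r%:R ^+ (m - i) * (fib r)%:R * x ^+ r))
    - n%:R ^+ m * ((fib n.+1)%:R * x ^+ n.+1 + (fib n)%:R * x ^+ n.+2)
      / (1 - x - x ^+ 2).
Proof.
have := @key R x m n hm; rewrite /A /B /G => H; apply: (mulfI hx); rewrite H.
by field.
Qed.
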